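(* Let $(X,X')$ be an exchangeable pair of random elements, and let $W=W(X)$ and $W'=W(X')$ be integer valued. Define $Q_m(x)=\mathbb{P}[W'=W+m\mid X=x]$ and $q_m=\mathbb{E}Q_m(X)=\mathbb{P}[W'=W+m]$. Then for every positive integer $m$ (with $q_m>0$), \[ D_{1,m}(\mathcal{L}(W))\le\frac{\sqrt{\mathrm{Var}\,Q_m(X)}+\sqrt{\mathrm{Var}\,Q_{-m}(X)}}{q_m}. \]
   Context: For $f:\mathbb{Z}\to\mathbb{R}$, $\|f\|_1=\sum_i|f(i)|$; $\Delta^0f=f$, $\Delta^{n+1}f(k)=\Delta^nf(k+1)-\Delta^nf(k)$. For an integer-valued random variable $W$ with distribution function $F(j)=\mathbb{P}[W\le j]$ and positive integer $m$, $\bar F^m(j)=\frac{F(j)+\dots+F(j-m+1)}{m}$ and $D_{n,m}(\mathcal{L}(W))=m\|\Delta^{n+1}\bar F^m\|_1$. *)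

(* Defs.v *)
From HB Require Import structures.
From mathcomp Require Import all_boot all_order all_algebra.
From mathcomp Require Import all_classical all_reals all_analysis.
Set Implicit Arguments. Unset Strict Implicit. Unset Printing Implicit Defensive.
Import Order.TTheory GRing.Theory Num.Theory.
Local Open Scope classical_set_scope.
Local Open Scope ring_scope.

Fixpoint Delta {R : ringType} (n : nat) (f : int -> R) : int -> R :=
  match n with
  | 0%N => f
  | n'.+1 => fun k => Delta n' f (k + 1) - Delta n' f k
  end.

Definition Fbar {R : realType} (m : nat) (F : int -> R) : int -> R :=
  fun j => (\sum_(i < m) F (j - (i%:Z))) / m%:R.

Definition l1norm {R : realType} (f : int -> R) : \bar R :=
  \esum_(j in [set: int]) (`|f j|)%:E.

Definition distrfun {d} {Omega : measurableType d} {R : realType}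
  (P : probability Omega R) (Y : Omega -> int) : int -> R :=
  fun j => fine (P [set w | Y w <= j]).

Definition Dnm {d} {Omega : measurableType d} {R : realType}
  (P : probability Omega R) (n m : nat) (Y : Omega -> int) : \bar R :=
  ((m%:R : R)%:E * l1norm (Delta n.+1 (Fbar m (distrfun P Y))))%E.

Definition exchangeable {d d'} {Omega : measurableType d} {T : measurableType d'}
  {R : realType} (P : probability Omega R) (X X' : Omega -> T) : Prop :=
  [/\ measurable_fun setT X, measurable_fun setT X' &
  forall E : set (T * T), measurable E ->
    P ((fun w => (X w, X' w)) @^-1` E) = P ((fun w => (X' w, X w)) @^-1` E)].

(* Q is a version of the conditional probability P[E | X = x], i.e. a
   measurable function of x such that Q(X) is a version of P[E | sigma(X)]:
   for every measurable A, E[ 1_{X in A} Q(X) ] = P[{X in A} /\ E]. *)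
Definition cond_prob_given {d d'} {Omega : measurableType d} {T : measurableType d'}
  {R : realType} (P : probability Omega R) (X : Omega -> T) (E : set Omega)
  (Q : T -> R) : Prop :=
  measurable_fun setT Q /\
  forall A : set T, measurable A ->
    (\int[P]_(w in X @^-1` A) (Q (X w))%:E)%E = P (X @^-1` A `&` E).

(* Main.v *)
Require Import Defs.
From HB Require Import structures.
From mathcomp Require Import all_boot all_order all_algebra.
From mathcomp Require Import all_classical all_reals all_analysis.
From mathcomp Require Import measurable_realfun.
From mathcomp Require Import ring lra zify.
Import Order.TTheory GRing.Theory Num.Theory.
Local Open Scope classical_set_scope.
Local Open Scope ring_scope.

Section cp.
Context d d' (Omega : measurableType d) (T : measurableType d') (R : realType)
  (P : probability Omega R) (X : Omega -> T) (E : set Omega) (Q : T -> R).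
Hypothesis mX : measurable_fun setT X.
Hypothesis mE : measurable E.
Hypothesis hQ : cond_prob_given P X E Q.

Lemma cp_mpre (A : set T) : measurable A -> measurable (X @^-1` A).
Proof. by move=> mA; rewrite -(setTI (X @^-1` A)); exact: mX. Qed.

Lemma cp_mY : measurable_fun setT (Q \o X).
Proof. exact: measurableT_comp hQ.1 mX. Qed.

Lemma cp_mYE (D : set Omega) : measurable_fun D (EFin \o (Q \o X) : Omega -> \bar R).
Proof.
apply/measurable_EFinP; exact: measurable_funS cp_mY.
Qed.

Lemma cp_mQ (i : interval R) : measurable (Q @^-1` [set` i]).
Proof.
rewrite -(setTI (Q @^-1` _)); apply: hQ.1 => //.
Qed.

Lemma cp_mQpre (i : interval R) : measurable (X @^-1` (Q @^-1` [set` i])).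
Proof. exact/cp_mpre/cp_mQ. Qed.

Lemma cp_neg_null : P (X @^-1` (Q @^-1` [set` `]-oo, 0[%R])) = 0%E.
Proof.
set D := X @^-1` _.
have mD : measurable D by exact: cp_mQpre.
have DE w : D w -> Q (X w) < 0 by rewrite /D /= in_itv.
have h := hQ.2 _ (cp_mQ `]-oo, 0[%R).
have h0 : (\int[P]_(w in D) `|(Q (X w))%:E| = 0)%E.
  apply/eqP; rewrite eq_le integral_ge0 ?andbT; last by move=> *.
  rewrite (eq_integral (fun w => (- (Q (X w))%:E))%E); last first.
    move=> w /set_mem /DE Hw; rewrite lte0_abs //.
  have HY : (\int[P]_(w in D) (Q (X w))%:E = - \int[P]_(w in D) (- Q (X w))%:E)%E.
    rewrite -integral_ge0N; last by move=> w /DE ?; rewrite lee_fin oppr_ge0 ltW.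
    by apply: eq_integral => w _; rewrite EFinN oppeK.
  rewrite (eq_integral (fun w => (- Q (X w))%:E)); last by move=> w _; rewrite EFinN.
  rewrite -[X in (X <= _)%E]oppeK -HY /D h oppe_le0; exact: measure_ge0.
have /(@ae_eq_integral_abs _ _ _ P _ mD (EFin \o (Q \o X)) (cp_mYE D)) [N [mN N0 sN]] := h0.
apply/eqP; rewrite eq_le measure_ge0 andbT -N0 le_measure ?inE //.
move=> w Dw; apply: sN => /= H; have := H Dw; move=> /= [] /eqP.
by rewrite lt_eqF // DE.
Qed.

Lemma cp_gt1_null : P (X @^-1` (Q @^-1` [set` `]1, +oo[%R])) = 0%E.
Proof.
set D := X @^-1` _.
have mD : measurable D by exact: cp_mQpre.
have DE w : D w -> 1 < Q (X w) by rewrite /D /= in_itv andbT.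
have h := hQ.2 _ (cp_mQ `]1, +oo[%R).
have mY1 : measurable_fun D (EFin \o (fun w => Q (X w) - 1) : Omega -> \bar R).
  apply/measurable_EFinP; apply: measurable_funB; last exact: measurable_cst.
  exact: measurable_funS cp_mY.
have h0 : (\int[P]_(w in D) `|(Q (X w) - 1)%:E| = 0)%E.
  apply/eqP; rewrite eq_le integral_ge0 ?andbT; last by move=> *.
  rewrite (eq_integral (fun w => (Q (X w) - 1)%:E)); last first.
    by move=> w /set_mem /DE Hw; rewrite gee0_abs // lee_fin subr_ge0 ltW.
  have H1 : (\int[P]_(w in D) (Q (X w))%:E =
     \int[P]_(w in D) (Q (X w) - 1)%:E + \int[P]_(w in D) (cst 1%E) w)%E.
    rewrite -ge0_integralD //.
    - by apply: eq_integral => w _; rewrite /= -EFinD subrK.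
    - by move=> w /DE ?; rewrite lee_fin subr_ge0 ltW.
  rewrite integral_cst // mul1e in H1.
  have : (P (D `&` E) <= P D)%E.
    rewrite le_measure ?inE //; exact: measurableI.
  have hD : (\int[P]_(w in D) (Q (X w))%:E)%E = P (D `&` E) := h.
  rewrite -hD H1 -[X in (_ <= X)%E](add0e (P D)) leeD2rE //.
  exact: fin_num_measure.
have /(@ae_eq_integral_abs _ _ _ P _ mD _ mY1) [N [mN N0 sN]] := h0.
apply/eqP; rewrite eq_le measure_ge0 andbT -N0 le_measure ?inE //.
move=> w Dw; apply: sN => /= H; have := H Dw; move=> /= [] /eqP.
by rewrite subr_eq0 gt_eqF // DE.
Qed.

Lemma cp_ae : exists N, [/\ measurable N, P N = 0%E &
  forall w, ~ N w -> 0 <= Q (X w) <= 1].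
Proof.
exists (X @^-1` (Q @^-1` [set` `]-oo, 0[%R]) `|` X @^-1` (Q @^-1` [set` `]1, +oo[%R])).
split.
- by apply: measurableU; exact: cp_mQpre.
- rewrite measureU0; try exact: cp_mQpre.
  + exact: cp_neg_null.
  + exact: cp_gt1_null.
- move=> w Nw; apply/andP; split.
  + rewrite leNgt; apply/negP => H; apply: Nw; left; by rewrite /= in_itv.
  + rewrite leNgt; apply/negP => H; apply: Nw; right; by rewrite /= in_itv andbT.
Qed.

Lemma cp_ae_le (f g : Omega -> \bar R) :
  (forall w, 0 <= Q (X w) <= 1 -> (f w <= g w)%E) ->
  {ae P, forall w, setT w -> (f w <= g w)%E}.
Proof.
move=> fg; have [N [mN N0 HN]] := cp_ae.
exists N; split => // w /= nP; apply: contrapT => nN; apply: nP => _.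
exact/fg/HN.
Qed.

Lemma cp_int : P.-integrable setT (EFin \o (Q \o X)).
Proof.
apply/integrableP; split; first exact: cp_mYE.
have H : (\int[P]_(w in setT) `|(EFin \o (Q \o X)) w| <= \int[P]_(w in setT) (cst 1%E) w)%E.
  apply: ae_ge0_le_integral => //.
  - apply: measurableT_comp => //; exact: cp_mYE.
  - apply: cp_ae_le => w /andP[h0 h1]; rewrite /= lee_fin ger0_norm //.
apply: le_lt_trans H _.
rewrite integral_cst // mul1e -ge0_fin_numE ?fin_num_measure //.
Qed.

Lemma cp_E : ('E_P[Q \o X] = P E)%E.
Proof.
rewrite unlock; have := hQ.2 _ measurableT.
by rewrite preimage_setT setTI.
Qed.

Lemma cp_VE : ('V_P[Q \o X] = \int[P]_w
  ((Q (X w) - fine 'E_P[Q \o X]) * (Q (X w) - fine 'E_P[Q \o X]))%:E)%E.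
Proof. by rewrite /variance covariance.unlock expectation.unlock. Qed.

Lemma cp_Vfin : ('V_P[Q \o X] \is a fin_num)%E.
Proof.
rewrite cp_VE; set c := fine _.
rewrite ge0_fin_numE; last by apply: integral_ge0 => w _; rewrite lee_fin -expr2 sqr_ge0.
have H : (\int[P]_(w in setT) ((Q (X w) - c) * (Q (X w) - c))%:E <=
          \int[P]_(w in setT) (cst (2 + 2 * c ^+ 2)%:E) w)%E.
  apply: ae_ge0_le_integral => //.
  - by move=> w _; rewrite lee_fin -expr2 sqr_ge0.
  - apply/measurable_EFinP; apply: measurable_funM; apply: measurable_funB => //;
      exact: cp_mY.
  - move=> w _; rewrite lee_fin /=; have := sqr_ge0 c; lra.
  - apply: cp_ae_le => w /andP[h0 h1]; rewrite /= lee_fin.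
    have := sqr_ge0 (Q (X w) + c); rewrite !expr2.
    have : Q (X w) * Q (X w) <= 1 by nra.
    nra.
apply: le_lt_trans H _.
rewrite integral_cst // -ge0_fin_numE.
  by rewrite fin_numM // fin_num_measure.
apply: mule_ge0; first by rewrite lee_fin; have := sqr_ge0 c; lra.
exact: measure_ge0.
Qed.

Lemma cp_absdev : (\int[P]_w (`|Q (X w) - fine 'E_P[Q \o X]|)%:E <=
   (Num.sqrt (fine 'V_P[Q \o X]))%:E)%E.
Proof.
set c := fine 'E_P[Q \o X].
set I := (\int[P]_w _)%E.
have mYc : measurable_fun setT (fun w => Q (X w) - c).
  by apply: measurable_funB => //; exact: cp_mY.
have I0 : (0 <= I)%E by apply: integral_ge0 => w _; rewrite lee_fin.
have key s : 0 < s -> ((2 * s)%:E * I <= 'V_P[Q \o X] + (s ^+ 2)%:E)%E.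
  move=> s0; rewrite cp_VE -/c /I.
  rewrite -ge0_integralZl_EFin //; [|by apply/measurable_EFinP; apply: measurableT_comp|lra].
  have -> : ((s ^+ 2)%:E = \int[P]_(w in setT) (cst (s ^+ 2)%:E) w)%E.
    rewrite integral_cst // -[LHS]mule1; congr (_ * _)%E; exact/esym/probability_setT.
  rewrite -ge0_integralD //; last 3 first.
  - by move=> w _; rewrite lee_fin -expr2 sqr_ge0.
  - apply/measurable_EFinP; exact: measurable_funM.
  - by move=> w _; rewrite lee_fin sqr_ge0.
  apply: ge0_le_integral => //.
  - by move=> w _; rewrite -EFinM lee_fin; apply: mulr_ge0 => //; lra.
  - apply: emeasurable_funM => //.
    by apply/measurable_EFinP; apply: measurableT_comp.
  - apply: emeasurable_funD => //.
    apply/measurable_EFinP; exact: measurable_funM.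
  - move=> w; rewrite /= -EFinM -EFinD lee_fin.
    set y := Q (X w) - c.
    have e : y * y = `|y| * `|y| by rewrite -normrM ger0_norm // -expr2 sqr_ge0.
    have := sqr_ge0 (`|y| - s); rewrite e expr2; nra.
have Vf := cp_Vfin.
have If : (I \is a fin_num)%E.
  have := key 1 ltr01; move: I0; clear key; case: I => //=.
  rewrite -(fineK Vf) -EFinD mulr1 => _; rewrite mulry gtr0_sg ?mul1e //.
have keyr s : 0 < s -> 2 * s * fine I <= fine 'V_P[Q \o X] + s ^+ 2.
  by move=> s0; have := key s s0; rewrite -(fineK If) -(fineK Vf) -EFinM -EFinD lee_fin.
rewrite -(fineK If) lee_fin.
have v0 : 0 <= fine 'V_P[Q \o X] by apply: fine_ge0; exact: variance_ge0.
have [i0|i0] := leP (fine I) 0; first exact: le_trans i0 (sqrtr_ge0 _).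
have h := keyr _ i0.
have hi : fine I ^+ 2 <= fine 'V_P[Q \o X] by rewrite expr2; rewrite expr2 in h; nra.
by rewrite -(ger0_norm (ltW i0)) -sqrtr_sqr ler_sqrt.
Qed.

End cp.
Lemma Fbar_diff (R : realType) (m : nat) (F : int -> R) (j : int) : (0 < m)%N ->
  Fbar m F (j + 1) - Fbar m F j = (F (j + 1) - F (j + 1 - m%:Z)) / m%:R.
Proof.
case: m => [//|m] _; rewrite /Fbar -mulrBl; congr (_ / _).
rewrite big_ord_recl big_ord_recr /= subr0.
have -> : \sum_(i < m) F (j + 1 - (lift ord0 i)%:Z) = \sum_(i < m) F (j - (widen_ord (leqnSn m) i)%:Z).
  apply: eq_bigr => i _; congr F; rewrite lift0 /=; lia.
have -> : j - m%:Z = j + 1 - m.+1%:Z by lia.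
have -> : \sum_(i < m) F (j - (widen_ord (leqnSn m) i)%:Z) = \sum_(i < m) F (j - i%:Z) by [].
lra.
Qed.

Lemma Delta2_Fbar (R : realType) (m : nat) (F : int -> R) (j : int) : (0 < m)%N ->
  Delta 2 (Fbar m F) j =
  ((F (j + 2) - F (j + 1)) - (F (j + 2 - m%:Z) - F (j + 1 - m%:Z))) / m%:R.
Proof.
move=> m0; rewrite /= !Fbar_diff //.
have -> : j + 1 + 1 = j + 2 by lia.
rewrite -mulrBl; congr (_ / _); lra.
Qed.

Lemma sum_if_pred1 (R : realDomainType) (t : seq int) (z : int) (x : \bar R) :
  uniq t -> (\sum_(k <- t) (if z == k then x else 0) = if z \in t then x else 0)%E.
Proof.
elim: t => [|a t IH] /=; first by rewrite big_nil.
move=> /andP[nat ut]; rewrite big_cons IH // in_cons.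
have [->|za] := eqVneq z a; last by rewrite add0e.
by rewrite (negbTE nat) adde0.
Qed.

Lemma sum_int_le d (Omega : measurableType d) (R : realType)
  (P : {measure set Omega -> \bar R}) (Z : Omega -> int) (g : Omega -> \bar R)
  (s : seq int) (f : int -> int) :
  uniq s -> injective f -> (forall k, measurable (Z @^-1` [set k])) ->
  measurable_fun setT g -> (forall w, 0 <= g w)%E ->
  (\sum_(j <- s) \int[P]_(w in Z @^-1` [set f j]) g w <= \int[P]_w g w)%E.
Proof.
move=> us fi mZ mg g0.
under eq_bigr do rewrite integral_mkcond.
rewrite -ge0_integral_sum //; last 2 first.
- by move=> j; apply/(measurable_restrictT _ (mZ (f j))); exact: measurable_funTS.
- by move=> j w _; rewrite patchE; case: ifP.
apply: ge0_le_integral => //.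
- by move=> w _; apply: sume_ge0 => j _; rewrite patchE; case: ifP.
- apply: emeasurable_sum => j.
  by apply/(measurable_restrictT _ (mZ (f j))); exact: measurable_funTS.
- move=> w _.
  have -> : (\sum_(j <- s) (g \_ (Z @^-1` [set f j])) w =
            \sum_(k <- map f s) (if Z w == k then g w else 0))%E.
    rewrite big_map; apply: eq_bigr => j _; rewrite patchE.
    case: ifPn => [/set_mem /= ->|/negP H]; first by rewrite eqxx.
    case: eqP => // e; exfalso; apply: H; exact/mem_set.
  rewrite sum_if_pred1 ?map_inj_uniq //.
  by case: ifP.
Qed.

Arguments cp_int {d d' Omega T R P X E Q}.
Arguments cp_E {d d' Omega T R P X E Q}.
Arguments cp_absdev {d d' Omega T R P X E Q}.

Theorem theorem3 (d d' : measure_display) (Omega : measurableType d)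
  (T : measurableType d') (R : realType) (P : probability Omega R)
  (X X' : Omega -> T) (W : T -> int) (m : nat) (Qp Qn : T -> R) :
  exchangeable P X X' ->
  (forall k : int, measurable (W @^-1` [set k])) ->
  (0 < m)%N ->
  cond_prob_given P X [set w | W (X' w) = W (X w) + m%:Z] Qp ->
  cond_prob_given P X [set w | W (X' w) = W (X w) - m%:Z] Qn ->
  let q := fine (P [set w | W (X' w) = W (X w) + m%:Z]) in
  0 < q ->
  (Dnm P 1 m (W \o X) <=
    ((Num.sqrt (fine ('V_P[Qp \o X])) + Num.sqrt (fine ('V_P[Qn \o X]))) / q)%:E)%E.
Proof.
move=> [mX mX' hex] hW m0 hQp hQn q q0.
have hWB (B : set int) : measurable (W @^-1` B).
  have -> : W @^-1` B = \bigcup_k (W @^-1` (B `&` [set k])).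
    apply/seteqP; split => [w Bw|w [k _ [Bk _]]] //=.
    by exists (W w).
  apply: countable_bigcupT_measurable; first exact: countableP.
  by move=> k; rewrite setI1; case: ifP => _ //; rewrite preimage_set0.
have mpre (Y : Omega -> T) (B : set T) : measurable_fun setT Y -> measurable B ->
    measurable (Y @^-1` B).
  by move=> mY mB; rewrite -(setTI (Y @^-1` _)); apply: mY.
have mS k : measurable (X @^-1` (W @^-1` [set k])) by apply: mpre.
set E1 := [set w | W (X' w) = W (X w) + m%:Z].
set E2 := [set w | W (X' w) = W (X w) - m%:Z].
have mE1 : measurable E1.
  have -> : E1 = \bigcup_k (X @^-1` (W @^-1` [set k]) `&` X' @^-1` (W @^-1` [set k + m%:Z])).
    apply/seteqP; split => [w /= h|w [k _ /= [h1 h2]]].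
    - by exists (W (X w)) => //=; split.
    - by rewrite /E1 /= h1 h2.
  apply: countable_bigcupT_measurable; first exact: countableP.
  by move=> k; apply: measurableI; apply: mpre.
have mE2 : measurable E2.
  have -> : E2 = \bigcup_k (X @^-1` (W @^-1` [set k]) `&` X' @^-1` (W @^-1` [set k - m%:Z])).
    apply/seteqP; split => [w /= h|w [k _ /= [h1 h2]]].
    - by exists (W (X w)) => //=; split.
    - by rewrite /E2 /= h1 h2.
  apply: countable_bigcupT_measurable; first exact: countableP.
  by move=> k; apply: measurableI; apply: mpre.
set S := fun k => X @^-1` (W @^-1` [set k]).
have exk k : P (S k `&` E1) = P (S (k + m%:Z) `&` E2).
  have := hex _ (measurableX (hW k) (hW (k + m%:Z))).
  have -> : (fun w => (X w, X' w)) @^-1` (W @^-1` [set k] `*` W @^-1` [set k + m%:Z])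
      = S k `&` E1.
    apply/seteqP; split => w /= [h1 h2]; split => //.
    - by rewrite /E1 /= h2 h1.
    - by rewrite h2 h1.
  have -> : (fun w => (X' w, X w)) @^-1` (W @^-1` [set k] `*` W @^-1` [set k + m%:Z])
      = S (k + m%:Z) `&` E2.
    apply/seteqP; split => w /= [h1 h2]; split => //.
    - by rewrite /E2 /= h1 h2 addrK.
    - by rewrite h2 h1 addrK.
  by [].
have HE : P E1 = P E2.
  have mG : measurable [set z : T * T | W z.2 = W z.1 + m%:Z].
    have -> : [set z : T * T | W z.2 = W z.1 + m%:Z] =
        \bigcup_k (W @^-1` [set k] `*` W @^-1` [set k + m%:Z]).
      apply/seteqP; split => [[x y] /= h|[x y] [k _ /= [h1 h2]]].
      - by exists (W x) => //=; split.
      - by rewrite h1 h2.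
    apply: countable_bigcupT_measurable; first exact: countableP.
    by move=> k; exact: measurableX.
  have := hex _ mG.
  have -> : (fun w => (X' w, X w)) @^-1` [set z : T * T | W z.2 = W z.1 + m%:Z] = E2.
    apply/seteqP; split => w /= h.
    - by rewrite /E2 /= h addrK.
    - by rewrite h subrK.
  by [].
have EY1 : fine 'E_P[Qp \o X] = q by rewrite (cp_E hQp).
have EY2 : fine 'E_P[Qn \o X] = q by rewrite (cp_E hQn) -HE.
set p := fun k => fine (P (S k)).
have Pp k : P (S k) = (p k)%:E.
  by rewrite /p fineK //; apply: fin_num_measure; exact: mS.
have dev (Q : T -> R) (E : set Omega) (k : int) (c : \bar R) :
    cond_prob_given P X E Q -> measurable E ->
    (\int[P]_(w in S k) (Q (X w))%:E = c)%E ->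
    (c \is a fin_num)%E /\
    (`|q * p k - fine c|%:E <= \int[P]_(w in S k) (`|Q (X w) - q|)%:E)%E.
  move=> hQ mE hc; have mSk := mS k.
  have mY : measurable_fun setT (EFin \o (Q \o X)).
    by apply/measurable_EFinP; exact: measurableT_comp hQ.1 mX.
  have iQ : P.-integrable (S k) (EFin \o (Q \o X)).
    exact: integrableS measurableT (mS k) (subsetT _) (cp_int mX mE hQ).
  have cf : (c \is a fin_num)%E by rewrite -hc; exact: (integrable_fin_num (mS k) iQ).
  split => //.
  have e : ((q * p k - fine c)%:E =
      \int[P]_(w in S k) ((cst q w)%:E - (Q (X w))%:E))%E.
    rewrite integralB_EFin //; try exact: mS; try exact: (finite_measure_integrable_cst P q (mS k)).
    rewrite hc.
    have -> : (\int[P]_(x in S k) (cst q x)%:E = q%:E * P (S k))%E.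
      by rewrite -integral_cst; [|exact: mS].
    by rewrite Pp -(fineK cf) -EFinM -EFinB.
  rewrite -abse_EFin e.
  apply: le_trans (le_abse_integral _ _ _) _ => //.
    apply: emeasurable_funB => //; last exact: measurable_funTS mY.
    by apply/measurable_EFinP; exact: measurable_cst.
  apply: ge0_le_integral => //.
  - apply: measurableT_comp => //.
    apply: emeasurable_funB => //; last exact: measurable_funTS mY.
    by apply/measurable_EFinP; exact: measurable_cst.
  - apply/measurable_EFinP; apply: measurableT_comp => //.
    apply: measurable_funB => //.
    exact: measurable_funTS (measurableT_comp hQ.1 mX).
  - move=> w _; have -> : ((cst q w)%:E - (Q (X w))%:E)%E = (q - Q (X w))%:E by [].
    by rewrite abse_EFin distrC.
have perk k : ((q * `|p k - p (k + m%:Z)|)%:E <=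
    \int[P]_(w in S k) (`|Qp (X w) - q|)%:E +
    \int[P]_(w in S (k + m%:Z)%R) (`|Qn (X w) - q|)%:E)%E.
  have [cf a1] := @dev Qp E1 k _ hQp mE1 (hQp.2 _ (hW k)).
  have h2 : (\int[P]_(w in S (k + m%:Z)%R) (Qn (X w))%:E = P (S k `&` E1))%E.
    by rewrite (hQn.2 _ (hW _)) -exk.
  have [_ a2] := @dev Qn E2 (k + m%:Z) (P (S k `&` E1)) hQn mE2 h2.
  apply: le_trans (leeD a1 a2); rewrite -EFinD lee_fin.
  set c := fine _.
  rewrite -[q in q * _]ger0_norm ?(ltW q0) // -normrM.
  have -> : q * (p k - p (k + m%:Z)) = (q * p k - c) + - (q * p (k + m%:Z) - c) by ring.
  by apply: le_trans (ler_normD _ _) _; rewrite normrN.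
have Fd i i' : i' = i + 1 ->
    distrfun P (W \o X) i' - distrfun P (W \o X) i = p i'.
  move=> ->; rewrite /distrfun.
  set A := [set w | (W \o X) w <= i].
  have mA : measurable A.
    have -> : A = X @^-1` (W @^-1` [set k | k <= i]) by [].
    by apply: mpre => //; exact: hWB.
  have -> : [set w | (W \o X) w <= i + 1] = A `|` S (i + 1).
    apply/seteqP; split => w /=.
    - move=> h; rewrite le_eqVlt in h; case/orP: h => [/eqP e|h]; first by right.
      by left; rewrite /A /= -ltzD1.
    - by case => [h| ->]; [rewrite /A /= in h; lia|].
  rewrite measureU //; last first.
    apply/seteqP; split => w // [h1 h2]; rewrite /A /= in h1; rewrite /S /= in h2.
    by rewrite h2 in h1; lia.
    exact: mS.
  have -> : (P A + P (S (i + 1)))%R = (P A + P (S (i + 1)%R))%E by [].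
  rewrite fineD ?fin_num_measure //; last exact: mS.
  rewrite /p; lra.
have D2 j : Delta 2 (Fbar m (distrfun P (W \o X))) j =
    (p (j + 2) - p (j + 2 - m%:Z)) / m%:R.
  by rewrite Delta2_Fbar // (Fd (j + 1) (j + 2)) ?(Fd (j + 1 - m%:Z) (j + 2 - m%:Z)) //; lia.
set s1 := Num.sqrt (fine 'V_P[Qp \o X]).
set s2 := Num.sqrt (fine 'V_P[Qn \o X]).
have core (s : seq int) : uniq s ->
    q * \sum_(j <- s) `|p (j + 2) - p (j + 2 - m%:Z)| <= s1 + s2.
  move=> us; rewrite -lee_fin mulr_sumr -sumEFin.
  apply: (@le_trans _ _ (\sum_(j <- s) (\int[P]_(w in S (j + 2 - m%:Z)%R) (`|Qp (X w) - q|)%:E +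
    \int[P]_(w in S (j + 2)%R) (`|Qn (X w) - q|)%:E))%E).
    apply: lee_sum => j _; have := perk (j + 2 - m%:Z); rewrite subrK distrC; done.
  rewrite big_split /= EFinD; apply: leeD.
  - apply: le_trans (@sum_int_le _ _ _ P (W \o X) (fun w => (`|Qp (X w) - q|)%:E) s
        (fun j => j + 2 - m%:Z) us _ _ _ _) _.
    + by move=> a b /addIr /addIr.
    + by move=> k; exact: (mS k).
    + apply/measurable_EFinP; apply: measurableT_comp => //.
      by apply: measurable_funB => //; exact: measurableT_comp hQp.1 mX.
    + by move=> w; rewrite lee_fin.
    + by have := cp_absdev mX mE1 hQp; rewrite EY1.
  - apply: le_trans (@sum_int_le _ _ _ P (W \o X) (fun w => (`|Qn (X w) - q|)%:E) s
        (fun j => j + 2) us _ _ _ _) _.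
    + by move=> a b /addIr.
    + by move=> k; exact: (mS k).
    + apply/measurable_EFinP; apply: measurableT_comp => //.
      by apply: measurable_funB => //; exact: measurableT_comp hQn.1 mX.
    + by move=> w; rewrite lee_fin.
    + by have := cp_absdev mX mE2 hQn; rewrite EY2.
have m0' : (0 < m%:R :> R) by rewrite ltr0n.
have esum_le : (\esum_(j in [set: int])
    (`|Delta 1.+1 (Fbar m (distrfun P (W \o X))) j|)%:E <= (((s1 + s2) / q) / m%:R)%:E)%E.
  apply: ge_ereal_sup => _ [A [finA _] <-].
  rewrite fsbig_finite // sumEFin lee_fin.
  under eq_bigr do rewrite D2 normrM normfV normr_nat.
  rewrite -mulr_suml ler_pM2r ?invr_gt0 // ler_pdivlMr // mulrC.
  exact: core (finmap.fset_uniq _).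
rewrite /Dnm /l1norm.
apply: le_trans (lee_pmul _ _ (lexx _) esum_le) _.
- by rewrite lee_fin ler0n.
- by apply: esum_ge0 => j _; rewrite lee_fin.
by rewrite -EFinM lee_fin mulrC divfK // gt_eqF.
Qed.
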